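(* Let $q\in\mathbb{C}$ with $|q|<1$, $r\in\mathbb{N}$, $n\in\mathbb{Z}_{+}=\{0,1,2,\dots\}$, $x$ real with $x\neq0,-1,-2,\dots$, and let $f\in\mathbb{N}$ be odd. Then $$E_{n,q}^{(r)}(x)=\left(\frac{[2]_q}{[2]_{q^f}}\right)^r[f]_q^n\sum_{a_1,\dots,a_r=0}^{f-1}(-1)^{a_1+\cdots+a_r}E_{n,q^f}^{(r)}\!\left(\frac{a_1+\cdots+a_r+x}{f}\right),$$ and moreover $$E_{n,q}^{(r)}(x)=\frac{[2]_q^r}{(1-q)^n}\sum_{l=0}^{n}\binom{n}{l}(-q^x)^l\sum_{a_1,\dots,a_r=0}^{f-1}\frac{(-1)^{a_1+\cdots+a_r}q^{l(a_1+\cdots+a_r)}}{(1+q^{lf})^r}.$$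
   Context: For a complex number $q$ with $|q|<1$ and $x$ real, $[x]_q=\frac{1-q^x}{1-q}$ (so $[2]_q=1+q$, $[2]_{q^f}=1+q^f$, $[f]_q=\frac{1-q^f}{1-q}$). For $r\in\mathbb{N}$, the $q$-Euler polynomials of order $r$ are defined by the generating function $$[2]_q^r\sum_{m_1,\dots,m_r=0}^{\infty}(-1)^{m_1+\cdots+m_r}e^{[m_1+\cdots+m_r+x]_q t}=\sum_{n=0}^{\infty}E_{n,q}^{(r)}(x)\frac{t^n}{n!},$$ and $E_{n,q^f}^{(r)}$ denotes the same with $q$ replaced by $q^f$. *)

(* Defs.v *)
From mathcomp Require Import all_boot all_order all_algebra.
From mathcomp Require Import all_classical all_reals all_analysis.
From mathcomp Require Export complex.
Import Order.TTheory GRing.Theory Num.Theory.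
Import numFieldNormedType.Exports.

Set Implicit Arguments.
Unset Strict Implicit.
Unset Printing Implicit Defensive.

Local Open Scope ring_scope.
Local Open Scope classical_set_scope.
Local Open Scope ring_scope.
Local Open Scope complex_scope.

Definition carg (R : realType) (z : R[i]) : R :=
  let a := complex.Re z in let b := complex.Im z in
  if 0 < a then atan (b / a)
  else if a < 0 then (if 0 <= b then atan (b / a) + pi else atan (b / a) - pi)
  else if 0 < b then pi / 2 else if b < 0 then - (pi / 2) else 0.

(* Principal power q^x = exp (x Log q) for complex q <> 0 and real x;
   convention 0^x := 0 (only used for x <> 0 in the statement). *)
Definition qpow (R : realType) (q : R[i]) (x : R) : R[i] :=
  if q == 0 then 0
  else ((Num.sqrt (complex.Re q ^+ 2 + complex.Im q ^+ 2)) `^ x)%:C * (cos (x * carg q) +i* sin (x * carg q)).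

(* Limits of complex sequences / functions, componentwise
   (convergence in C = convergence of real and imaginary parts). *)
Definition clim (R : realType) (u : nat -> R[i]) : R[i] :=
  (limn (fun k => complex.Re (u k))) +i* (limn (fun k => complex.Im (u k))).

Definition cseries (R : realType) (u : nat -> R[i]) : R[i] :=
  clim (fun N => \sum_(k < N) u k).

Definition cabel (R : realType) (g : R -> R[i]) : R[i] :=
  (lim ((fun s => complex.Re (g s)) @ (1 : R)^'-)) +i*
  (lim ((fun s => complex.Im (g s)) @ (1 : R)^'-)).

(* r-fold iterated sum  sum_{m_1>=0} ... sum_{m_r>=0} F (m_1 + ... + m_r) *)
Fixpoint msum (R : realType) (r : nat) (F : nat -> R[i]) : R[i] :=
  if r is r'.+1 then cseries (fun m => msum r' (fun k => F (m + k)%N))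
  else F 0%N.

(* q-number [y]_b where the power b^y is given by pw y *)
Definition qnum (R : realType) (b : R[i]) (pw : R -> R[i]) (y : R) : R[i] :=
  (1 - pw y) / (1 - b).

(* Coefficient of t^n/n! in the generating function
     [2]_b^r sum_{m_1..m_r>=0} (-1)^(m_1+..+m_r) e^{[m_1+..+m_r+x]_b t},
   i.e. [2]_b^r sum_m (-1)^|m| [|m|+x]_b^n ; the (non-absolutely convergent,
   in fact divergent) alternating multiple sum is taken in the Abel sense. *)
Definition EulerGen (R : realType) (b : R[i]) (pw : R -> R[i])
    (r n : nat) (x : R) : R[i] :=
  cabel (fun s : R => (1 + b) ^+ r *
    msum r (fun N => (-1) ^+ N * (s ^+ N)%:C * (qnum b pw (N%:R + x)) ^+ n)).

Definition qEuler (R : realType) (q : R[i]) (r n : nat) (x : R) : R[i] :=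
  EulerGen q (qpow q) r n x.

(* E_{n,q^f}^{(r)}(y): q replaced by q^f, with (q^f)^y := q^{f y}
   (same branch of log as for q). *)
Definition qEuler_f (R : realType) (q : R[i]) (f r n : nat) (y : R) : R[i] :=
  EulerGen (q ^+ f) (fun z => qpow q (f%:R * z)) r n y.

(* Main.v *)
Require Import Defs.
From mathcomp Require Import all_boot all_order all_algebra.
From mathcomp Require Import all_classical all_reals all_analysis.
From mathcomp Require Import complex.
From mathcomp Require Import ring lra.
Import Order.TTheory GRing.Theory Num.Theory.
Import numFieldNormedType.Exports.
Local Open Scope classical_set_scope.
Local Open Scope ring_scope.
Local Open Scope complex_scope.
Section S.
Variable R : realType.

Lemma sqrt1t (a b : R) : a != 0 ->
  Num.sqrt (1 + (b / a) ^+ 2) = Num.sqrt (a ^+ 2 + b ^+ 2) / `|a|.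
Proof.
move=> a0.
have -> : 1 + (b / a) ^+ 2 = (a ^+ 2 + b ^+ 2) * (`|a|^-1) ^+ 2.
  rewrite exprVn real_normK ?num_real //; field; exact: a0.
rewrite sqrtrM ?addr_ge0 ?sqr_ge0 // sqrtr_sqr ger0_norm //.
Qed.

Lemma polar0 (a b : R) : a != 0 ->
  Num.sqrt (a ^+ 2 + b ^+ 2) * cos (atan (b / a)) = `|a| /\
  Num.sqrt (a ^+ 2 + b ^+ 2) * sin (atan (b / a)) = b * `|a| / a.
Proof.
move=> a0.
have rho0 : 0 < Num.sqrt (a ^+ 2 + b ^+ 2).
  have ha : 0 < a ^+ 2 by rewrite exprn_even_gt0.
  have hb := sqr_ge0 b.
  rewrite sqrtr_gt0; lra.
have c : cos (atan (b / a)) = `|a| / Num.sqrt (a ^+ 2 + b ^+ 2).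
  rewrite cos_atan sqrt1t // invf_div //.
have s : sin (atan (b / a)) = (b / a) * cos (atan (b / a)).
  have e := atanK (b / a); rewrite /tan in e.
  rewrite -[X in _ = X * _]e divfK // cos_atan invr_eq0 gt_eqF // sqrtr_gt0.
  have := sqr_ge0 (b / a); lra.
have r0 : Num.sqrt (a ^+ 2 + b ^+ 2) != 0 by rewrite gt_eqF.
split; first by rewrite c mulrCA mulfV // mulr1.
by rewrite s c; field; rewrite a0 r0.
Qed.

Lemma polar (a b : R) : a +i* b != 0 ->
  Num.sqrt (a ^+ 2 + b ^+ 2) * cos (carg (a +i* b)) = a /\
  Num.sqrt (a ^+ 2 + b ^+ 2) * sin (carg (a +i* b)) = b.
Proof.
move=> z0; rewrite /carg /=.
have cpi : forall t : R, cos (t + pi) = - cos t by move=> t; exact: cosDpi.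
have spi : forall t : R, sin (t + pi) = - sin t by move=> t; exact: sinDpi.
have cmpi : forall t : R, cos (t - pi) = - cos t.
  by move=> t; rewrite -[in RHS](subrK pi t) cpi opprK.
have smpi : forall t : R, sin (t - pi) = - sin t.
  by move=> t; rewrite -[in RHS](subrK pi t) spi opprK.
case: (ltgtP 0 a) => [a0|a0|a0].
- have an : a != 0 by rewrite gt_eqF.
  have [hc hs] := polar0 a b an.
  rewrite gtr0_norm // in hc hs.
  by rewrite hc hs mulfK.
- have an : a != 0 by rewrite lt_eqF.
  have [hc hs] := polar0 a b an.
  rewrite ltr0_norm // in hc hs.
  have e : b * - a / a = - b by rewrite mulrN mulNr mulfK.
  case: ifP => _.
  + rewrite cpi spi !mulrN hc hs e !opprK; split => //.
  + rewrite cmpi smpi !mulrN hc hs e !opprK; split => //.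
- subst a. rewrite expr0n /= add0r sqrtr_sqr.
  case: (ltgtP 0 b) => [b0|b0|b0].
  + rewrite cos_pihalf sin_pihalf mulr0 mulr1 gtr0_norm //.
  + rewrite cosN sinN cos_pihalf sin_pihalf mulr0 mulrN mulr1 ltr0_norm // opprK; split => //.
  + by subst b; rewrite eqxx in z0.
Qed.

Lemma qpowS (q : R[i]) (y : R) : qpow q (y + 1) = q * qpow q y.
Proof.
rewrite /qpow; case: eqP => [->|/eqP q0]; first by rewrite mul0r.
case: q q0 => a b q0 /=.
have [hc hs] := polar a b q0.
set rho := Num.sqrt _ in hc hs *.
set th := carg _ in hc hs *.
have rho0 : rho != 0.
  apply/eqP => r0; move: hc hs; rewrite r0 !mul0r => ha hb.
  by move: q0; rewrite -ha -hb eqxx.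
rewrite powRD ?rho0 ?implybT // powRr1 ?sqrtr_ge0 //.
rewrite mulrDl mul1r cosD sinD.
rewrite -hc -hs.
apply/eqP; rewrite eq_complex /=; apply/andP; split; apply/eqP; ring.
Qed.

Lemma qpowN (q : R[i]) (k : nat) (y : R) : qpow q (k%:R + y) = q ^+ k * qpow q y.
Proof.
elim: k => [|k IH]; first by rewrite add0r expr0 mul1r.
by rewrite -addn1 natrD addrAC qpowS IH addn1 exprS mulrA.
Qed.

Lemma Re_le_norm (z : R[i]) : `|complex.Re z| <= Num.sqrt (complex.Re z ^+ 2 + complex.Im z ^+ 2).
Proof. by rewrite -sqrtr_sqr ler_wsqrtr // lerDl sqr_ge0. Qed.

Lemma Im_le_norm (z : R[i]) : `|complex.Im z| <= Num.sqrt (complex.Re z ^+ 2 + complex.Im z ^+ 2).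
Proof. by rewrite -sqrtr_sqr ler_wsqrtr // lerDr sqr_ge0. Qed.

Lemma cvg_Re {T : Type} {F : set_system T} {FF : Filter F} {u : T -> R[i]^o} {L : R[i]^o} :
  u @ F --> L -> (fun t => complex.Re (u t)) @ F --> complex.Re L.
Proof.
move=> /cvgrPdist_lt H; apply/cvgrPdist_lt => e e0.
have e0' : 0 < e%:C by rewrite ltcR.
apply: filterS (H _ e0') => t; rewrite normc_def ltcR => h.
by rewrite -raddfB; apply: le_lt_trans (Re_le_norm _) h.
Qed.

Lemma cvg_Im {T : Type} {F : set_system T} {FF : Filter F} {u : T -> R[i]^o} {L : R[i]^o} :
  u @ F --> L -> (fun t => complex.Im (u t)) @ F --> complex.Im L.
Proof.
move=> /cvgrPdist_lt H; apply/cvgrPdist_lt => e e0.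
have e0' : 0 < e%:C by rewrite ltcR.
apply: filterS (H _ e0') => t; rewrite normc_def ltcR => h.
by rewrite -raddfB; apply: le_lt_trans (Im_le_norm _) h.
Qed.

Lemma normC_real (v : R) : `|v%:C| = `|v|%:C.
Proof. by rewrite normc_def /= expr0n /= addr0 sqrtr_sqr. Qed.

Lemma cvg_C {T : Type} {F : set_system T} {FF : Filter F} {v : T -> R} {l : R} :
  v @ F --> l -> (fun t => (v t)%:C : R[i]^o) @ F --> (l%:C : R[i]^o).
Proof.
move=> /cvgrPdist_lt H; apply/cvgrPdist_lt => e e0.
have ee : e = (complex.Re e)%:C.
  by move: e0; case: e => a b; rewrite ltcE /= => /andP[/eqP -> _].
have e0' : 0 < complex.Re e by move: e0; rewrite ltcE => /andP[].
apply: filterS (H _ e0') => t h.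
by rewrite -rmorphB normC_real ee ltcR.
Qed.

Lemma cvg_exprC (w : R[i]) : `|w| < 1 -> (fun N => w ^+ N : R[i]^o) @ \oo --> (0 : R[i]^o).
Proof.
move=> w1; apply: norm_cvg0.
have ew : `|w| = (complex.Re `|w|)%:C by rewrite normc_def.
have c1 : `|complex.Re `|w| | < 1.
  rewrite ger0_norm; last by rewrite normc_def /= sqrtr_ge0.
  by move: w1; rewrite {1}ew -[1]/(1%:C) ltcR.
have h := cvg_C (cvg_expr c1).
have -> : (fun x => `|w ^+ x|) = (fun N => ((complex.Re `|w|) ^+ N)%:C).
  by apply/funext => N; rewrite normrX ew rmorphXn.
exact: h.
Qed.

Lemma clim_eq (u : nat -> R[i]^o) (L : R[i]^o) : u @ \oo --> L -> clim u = L.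
Proof.
move=> h; rewrite /clim (norm_cvg_lim (cvg_Re h)) (norm_cvg_lim (cvg_Im h)).
by case: L {h}.
Qed.

Lemma cvg_bigsum {T : Type} {F : set_system T} {FF : Filter F} (L : nat)
  (g : nat -> T -> R[i]^o) (a : nat -> R[i]^o) :
  (forall l, (l < L)%N -> g l @ F --> a l) ->
  (fun t => \sum_(l < L) g l t) @ F --> \sum_(l < L) a l.
Proof.
elim: L => [|L IH] h.
  rewrite big_ord0; under eq_fun do rewrite big_ord0; exact: cvg_cst.
rewrite big_ord_recr /=; under eq_fun do rewrite big_ord_recr /=.
apply: cvgD; first by apply: IH => l lL; apply: h; exact: ltnW.
exact: h.
Qed.

Lemma geom_sum (z : R[i]) (N : nat) : z != 1 ->
  \sum_(k < N) z ^+ k = (z ^+ N - 1) / (z - 1).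
Proof.
move=> z1; by rewrite subrX1 mulrAC mulfV ?mul1r // subr_eq0.
Qed.

Lemma cseries_geom (L : nat) (d w : nat -> R[i]) :
  (forall l, (l < L)%N -> `|w l| < 1) ->
  cseries (fun m => \sum_(l < L) d l * w l ^+ m) = \sum_(l < L) d l / (1 - w l).
Proof.
move=> hw; apply: clim_eq.
have w1 : forall l, (l < L)%N -> w l != 1.
  move=> l lL; apply/eqP => e; have := hw l lL; rewrite e normr1 ltxx //.
have -> : (fun N => \sum_(k < N) \sum_(l < L) d l * w l ^+ k : R[i]^o) =
   (fun N => \sum_(l < L) d l * ((w l ^+ N - 1) / (w l - 1))).
  apply/funext => N; rewrite exchange_big /=; apply: eq_bigr => l _.
  by rewrite -mulr_sumr geom_sum // w1.
apply: (@cvg_bigsum _ \oo _ L (fun l N => d l * ((w l ^+ N - 1) / (w l - 1))) (fun l => d l / (1 - w l))) => l lL.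
have -> : d l / (1 - w l) = d l * ((0 - 1) / (w l - 1)).
  by rewrite sub0r mulN1r -invrN opprB.
apply: cvgMl_tmp; apply: cvgMr_tmp.
exact: (cvgB (cvg_exprC _ (hw l lL)) (cvg_cst _)).
Qed.

Lemma msum_geom (r L : nat) (c w : nat -> R[i]) :
  (forall l, (l < L)%N -> `|w l| < 1) ->
  Defs.msum r (fun N => \sum_(l < L) c l * w l ^+ N) = \sum_(l < L) c l / (1 - w l) ^+ r.
Proof.
move=> hw; elim: r c => [|r IH] c /=.
  by apply: eq_bigr => l _; rewrite !expr0 invr1 mulr1.
have -> : (fun m => Defs.msum r (fun k => \sum_(l < L) c l * w l ^+ (m + k))) =
          (fun m => \sum_(l < L) (c l / (1 - w l) ^+ r) * w l ^+ m).
  apply/funext => m.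
  have -> : (fun k => \sum_(l < L) c l * w l ^+ (m + k)) =
            (fun k => \sum_(l < L) (c l * w l ^+ m) * w l ^+ k).
    by apply/funext => k; apply: eq_bigr => l _; rewrite exprD mulrA.
  by rewrite (IH (fun l => c l * w l ^+ m)); apply: eq_bigr => l _; rewrite mulrAC.
rewrite (cseries_geom _ (fun l => c l / (1 - w l) ^+ r)) //; apply: eq_bigr => l _.
by rewrite exprSr invfM mulrA.
Qed.

Lemma P_expand (b p : R[i]) (s : R) (n N : nat) :
  (-1) ^+ N * (s ^+ N)%:C * ((1 - b ^+ N * p) / (1 - b)) ^+ n =
  \sum_(l < n.+1) ('C(n, l)%:R * (- p) ^+ l / (1 - b) ^+ n) * (- (s%:C * b ^+ l)) ^+ N.
Proof.
rewrite expr_div_n addrC exprD1n mulr_suml mulr_sumr; apply: eq_bigr => l _.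
have e1 : (- (s%:C * b ^+ l)) ^+ N = (-1) ^+ N * (s%:C) ^+ N * (b ^+ N) ^+ l.
  by rewrite [LHS]exprNn exprMn exprAC mulrA.
have e2 : (- (b ^+ N * p)) ^+ l = (- p) ^+ l * (b ^+ N) ^+ l.
  by rewrite -mulrN exprMn mulrC.
rewrite e1 e2 rmorphXn -mulr_natl.
ring.
Qed.

Lemma cvg_powC {T : Type} {F : set_system T} {FF : Filter F} (f : T -> R[i]^o) (a : R[i]^o) k :
  f @ F --> a -> (fun t => f t ^+ k) @ F --> a ^+ k.
Proof.
move=> h; elim: k => [|k IH].
  have -> : (fun t => f t ^+ 0) = (fun=> 1) by apply/funext => t; rewrite expr0.
  rewrite expr0; exact: cvg_cst.
have -> : (fun t => f t ^+ k.+1) = (f \* (fun t => f t ^+ k)).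
  by apply/funext => t; rewrite /= exprS.
rewrite exprS; exact: (cvgM h IH).
Qed.

Lemma ne0_1plus (z : R[i]) : `|z| < 1 -> 1 + z != 0.
Proof.
move=> h; apply/eqP => e; move: h.
have -> : z = -1 by apply/eqP; rewrite -addr_eq0 addrC e.
by rewrite normrN normr1 ltxx.
Qed.

Lemma ne0_1plusX (b : R[i]) (l : nat) : `|b| < 1 -> 1 + b ^+ l != 0.
Proof.
move=> hb; case: l => [|l].
  by rewrite expr0 (_ : 1 + 1 = 2%:R) ?pnatr_eq0.
apply: ne0_1plus; rewrite normrX; apply: exprn_ilt1 => //.
Qed.

Lemma EulerGen_eval (b : R[i]) (pw : R -> R[i]) (r n : nat) (x : R) :
  `|b| < 1 -> (forall N : nat, pw (N%:R + x) = b ^+ N * pw x) ->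
  EulerGen b pw r n x = (1 + b) ^+ r / (1 - b) ^+ n *
     \sum_(l < n.+1) 'C(n, l)%:R * (- pw x) ^+ l / (1 + b ^+ l) ^+ r.
Proof.
move=> hb hpw.
pose c := fun l : nat => 'C(n, l)%:R * (- pw x) ^+ l / (1 - b) ^+ n.
pose w := fun (s : R) (l : nat) => - (s%:C * b ^+ l).
pose h := fun s : R => (1 + b) ^+ r * \sum_(l < n.+1) c l / (1 - w s l) ^+ r.
have hnear : \forall s \near (1:R)^'-, h s = (1 + b) ^+ r *
    Defs.msum r (fun N => (-1) ^+ N * (s ^+ N)%:C * (qnum b pw (N%:R + x)) ^+ n).
  near=> s.
  have s1 : `|s| < 1.
    rewrite ger0_norm; last by apply: ltW; near: s; apply: nbhs_left_gt; exact: ltr01.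
    by near: s; exact: nbhs_left_lt.
  congr (_ * _).
  have -> : (fun N => (-1) ^+ N * (s ^+ N)%:C * (qnum b pw (N%:R + x)) ^+ n) =
            (fun N => \sum_(l < n.+1) c l * w s l ^+ N).
    by apply/funext => N; rewrite /qnum hpw P_expand.
  rewrite msum_geom // => l _.
  rewrite /w normrN normrM.
  have hbl : `|b ^+ l| <= 1 by rewrite normrX exprn_ile1 // ltW.
  apply: (le_lt_trans (ler_wpM2l (normr_ge0 _) hbl)).
  by rewrite mulr1 normC_real -[1]/(1%:C) ltcR.
have hcvg : h @ (1:R)^'- --> (h 1 : R[i]^o).
  apply: cvgMl_tmp.
  apply: (@cvg_bigsum _ _ _ n.+1 (fun l s => c l / (1 - w s l) ^+ r) (fun l => c l / (1 - w 1 l) ^+ r)) => l _.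
  apply: cvgMl_tmp.
  have hC : (fun s : R => (s%:C : R[i]^o)) @ (1:R)^'- --> ((1:R)%:C : R[i]^o).
    by apply: cvg_C; apply: cvg_at_left_filter; exact: cvg_id.
  have hw : (fun s => w s l : R[i]^o) @ (1:R)^'- --> (w 1 l : R[i]^o).
    by apply: cvgN; apply: cvgMr_tmp.
  have hX : (fun s => (1 - w s l) ^+ r : R[i]^o) @ (1:R)^'- --> ((1 - w 1 l) ^+ r : R[i]^o).
    apply: cvg_powC; exact: (cvgB (cvg_cst _) hw).
  have hne : (1 - w 1 l) ^+ r != 0.
    rewrite /w mul1r opprK; apply: expf_neq0; exact: ne0_1plusX.
  exact: (cvgV hne hX).
rewrite /EulerGen /cabel.
rewrite (norm_cvg_lim (_ : _ @ (1:R)^'- --> complex.Re (h 1))); last first.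
  apply: (cvg_trans _ (cvg_Re hcvg)); apply: near_eq_cvg.
  by apply: filterS hnear => s e; rewrite e.
rewrite (norm_cvg_lim (_ : _ @ (1:R)^'- --> complex.Im (h 1))); last first.
  apply: (cvg_trans _ (cvg_Im hcvg)); apply: near_eq_cvg.
  by apply: filterS hnear => s e; rewrite e.
have -> : (complex.Re (h 1) +i* complex.Im (h 1)) = h 1 by case: (h 1).
rewrite /h /w /c -mulrA; congr (_ * _); rewrite mulr_sumr; apply: eq_bigr => l _.
rewrite rmorph1 mul1r opprK; ring.
Unshelve. all: by end_near.
Qed.

Lemma sumK (z : R[i]) (r f : nat) :
  \sum_(a : {ffun 'I_r -> 'I_f}) (-1) ^+ (\sum_(i < r) (a i : nat))%N * z ^+ (\sum_(i < r) (a i : nat))%N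
  = (\sum_(j < f) (- z) ^+ j) ^+ r.
Proof.
have e : forall a : {ffun 'I_r -> 'I_f},
    (-1) ^+ (\sum_(i < r) (a i : nat))%N * z ^+ (\sum_(i < r) (a i : nat))%N
    = \prod_(i < r) (- z) ^+ (a i : nat).
  move=> a; rewrite -exprMn mulN1r.
  by rewrite (big_morph (fun k => (- z) ^+ k) (exprD (- z)) (expr0 (- z))).
rewrite (eq_bigr _ (fun a _ => e a)).
rewrite -(bigA_distr_bigA (fun (i : 'I_r) (j : 'I_f) => (- z) ^+ (j : nat))).
by rewrite prodr_const card_ord.
Qed.

Lemma geom_odd (z : R[i]) (f : nat) : odd f -> 1 + z != 0 ->
  \sum_(j < f) (- z) ^+ j = (1 + z ^+ f) / (1 + z).
Proof.
move=> hf hz.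
have hz' : - z != 1.
  by apply: contra hz => /eqP <-; rewrite addNr.
have hz'' : - z - 1 != 0 by rewrite subr_eq0.
rewrite geom_sum // exprNn -signr_odd hf expr1 mulN1r.
have -> : - z ^+ f - 1 = - (1 + z ^+ f) by rewrite opprD addrC.
have -> : - z - 1 = - (1 + z) by rewrite opprD addrC.
by rewrite invrN mulrNN.
Qed.
End S.

Theorem theorem4 (R : realType) (q : R[i]) (r n f : nat) (x : R) :
  `|q| < 1 -> (0 < r)%N -> (forall k : nat, x != - k%:R) -> odd f ->
  qEuler q r n x =
    ((1 + q) / (1 + q ^+ f)) ^+ r * ((1 - q ^+ f) / (1 - q)) ^+ n *
    \sum_(a : {ffun 'I_r -> 'I_f})
       (-1) ^+ (\sum_(i < r) (a i : nat))%N *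
       qEuler_f q f r n (((\sum_(i < r) (a i : nat))%N%:R + x) / f%:R)
  /\
  qEuler q r n x =
    (1 + q) ^+ r / (1 - q) ^+ n *
    \sum_(l < n.+1) 'C(n, l)%:R * (- qpow q x) ^+ l *
      \sum_(a : {ffun 'I_r -> 'I_f})
        (-1) ^+ (\sum_(i < r) (a i : nat))%N *
        q ^+ (l * \sum_(i < r) (a i : nat))%N / (1 + q ^+ (l * f)%N) ^+ r.
Proof.
move=> hq _ _ hf.
have f0 : (0 < f)%N by case: f hf.
have hqf : `|q ^+ f| < 1 by rewrite normrX exprn_ilt1 // -lt0n.
have E1 : qEuler q r n x = (1 + q) ^+ r / (1 - q) ^+ n *
     \sum_(l < n.+1) 'C(n, l)%:R * (- qpow q x) ^+ l / (1 + q ^+ l) ^+ r.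
  by rewrite /qEuler; apply: EulerGen_eval => // N; exact: qpowN.
have E2 : forall y, qEuler_f q f r n y = (1 + q ^+ f) ^+ r / (1 - q ^+ f) ^+ n *
     \sum_(l < n.+1) 'C(n, l)%:R * (- qpow q (f%:R * y)) ^+ l / (1 + (q ^+ f) ^+ l) ^+ r.
  move=> y; rewrite /qEuler_f; apply: EulerGen_eval => // N.
  by rewrite mulrDr -natrM qpowN exprM.
have key : forall l : nat,
  \sum_(a : {ffun 'I_r -> 'I_f})
        (-1) ^+ (\sum_(i < r) (a i : nat))%N *
        q ^+ (l * \sum_(i < r) (a i : nat))%N / (1 + q ^+ (l * f)%N) ^+ r
  = ((1 + q ^+ l) ^+ r)^-1.
  move=> l; rewrite -mulr_suml.
  under eq_bigr do rewrite exprM.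
  rewrite sumK geom_odd ?ne0_1plusX // -exprM expr_div_n mulrAC mulfV ?mul1r //.
  by apply: expf_neq0; apply: ne0_1plusX.
have S2 : qEuler q r n x =
    (1 + q) ^+ r / (1 - q) ^+ n *
    \sum_(l < n.+1) 'C(n, l)%:R * (- qpow q x) ^+ l *
      \sum_(a : {ffun 'I_r -> 'I_f})
        (-1) ^+ (\sum_(i < r) (a i : nat))%N *
        q ^+ (l * \sum_(i < r) (a i : nat))%N / (1 + q ^+ (l * f)%N) ^+ r.
  rewrite E1; congr (_ * _); apply: eq_bigr => l _; by rewrite key.
split; last exact: S2.
rewrite S2; symmetry.
have fn0 : (f%:R : R) != 0 by rewrite pnatr_eq0 -lt0n.
have hy : forall A : nat, f%:R * ((A%:R + x) / f%:R) = A%:R + x.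
  by move=> A; rewrite mulrC divfK.
under eq_bigr => a _ do rewrite E2 hy qpowN mulrCA mulr_sumr.
rewrite -mulr_sumr mulrA exchange_big /=.
under [X in _ = _ * X]eq_bigr => l _ do rewrite mulr_sumr.
congr (_ * _).
  have h1 : 1 + q ^+ f != 0 by apply: ne0_1plusX.
  have h2 : 1 - q ^+ f != 0.
    rewrite subr_eq0; apply/eqP => e; move: hqf; rewrite -e normr1 ltxx //.
  have h3 : 1 - q != 0.
    rewrite subr_eq0; apply/eqP => e; move: hq; rewrite -e normr1 ltxx //.
  rewrite !expr_div_n; field.
  by rewrite !expf_neq0.
apply: eq_bigr => l _; apply: eq_bigr => a _.
set A := (\sum_(i0 < r) a i0)%N.
rewrite -exprM mulnC -mulrN exprMn -exprM mulnC.
ring.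
Qed.
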